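(* Let $N\ge 1$, let $q\in\mathbb{C}\setminus\{0,\pm1\}$ be generic (i.e. $q^k\neq 1$ for all integers $k>0$), and let $R\in Mat_{N\times N}(\mathbb{C})^{\otimes 2}$ be a skew-invertible Hecke $R$-matrix. Let $W(R)$ be the quantum Weyl algebra with generating matrices $M$ and $D$, and put $\hat L = MD$. Then for every integer $n\ge 1$ the following identity holds in $Mat_{N\times N}(\mathbb{C})^{\otimes n}\otimes W(R)$: $$\hat L_{\overline{1}} \left(\hat L_{\overline{2}} + \frac{J_{2}^{-1} -1}{q-q^{-1}}\right) \cdots \left(\hat L_{\overline{n}} + \frac{J_{n}^{-1} -1}{q-q^{-1}}\right) = M_{\overline{1}} \cdots M_{\overline{n}}\, D_{\overline{n}} \cdots D_{\overline{1}}\, J_{1}^{-1} \cdots J_{n}^{-1}.$$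
   Context: Notation: for a matrix $A\in Mat_{N\times N}(\mathbb{C})\otimes U$ (entries in some vector space/algebra $U$), $A_i=\mathbb{E}\otimes\cdots\otimes A\otimes\cdots\otimes\mathbb{E}$ (with $A$ in the $i$-th tensor factor, $\mathbb{E}$ the identity matrix elsewhere); for $R\in Mat_{N\times N}(\mathbb{C})^{\otimes 2}$, $R_{ij}$ denotes $R$ acting in tensor factors $i,j$, and $R_i=R_{i\,i+1}$. $P_{12}$ is the permutation matrix, $P_{kl}^{mn}=\delta_k^n\delta_l^m$, and $Tr_{(k)}$ is the trace in the $k$-th tensor factor. A skew-invertible Hecke $R$-matrix is an invertible $R\in Mat_{N\times N}(\mathbb{C})^{\otimes 2}$ satisfying $R_1R_2R_1=R_2R_1R_2$, $R^2=1+(q-q^{-1})R$, and for which there is a matrix $\Psi$ with $Tr_{(2)}(R_{12}\Psi_{23})=P_{13}=Tr_{(2)}(\Psi_{12}R_{23})$. For an $N\times N$ matrix $A$ put $A_{\overline{1}}=A_1$ and $A_{\overline{k}}=R_{k-1}\cdots R_1A_1R_1^{-1}\cdots R_{k-1}^{-1}$ for $k>1$. The Reflection Equation algebra $M(R)$ is the unital associative algebra generated by entries $m_i^j$ of $M=\|m_i^j\|_{1\le i,j\le N}$ subject to $R_{12}M_1R_{12}M_1=M_1R_{12}M_1R_{12}$; $D(R^{-1})$ is the analogous algebra generated by the entries of a matrix $D$ with $R$ replaced by $R^{-1}$. The quantum Weyl algebra $W(R)$ is the quotient of the free product of $M(R)$ and $D(R^{-1})$ by the relations $D_1M_{\overline{2}}=R_1^{-1}+M_{\overline{2}}D_1R_1^{-2}$.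 $\hat L=MD$ is the matrix product of $M$ and $D$. $J_1=1$ and $J_k=R_{k-1}\cdots R_2R_1^2R_2\cdots R_{k-1}$ for $k>1$ (images of the Jucys–Murphy elements of the Hecke algebra); in the formula, $1$ denotes the identity matrix. *)

(* Defs.v *)
From HB Require Import structures.
From mathcomp Require Import all_boot all_order all_algebra.
From mathcomp Require Import complex.
From mathcomp Require Import Rstruct.
From Stdlib Require Rdefinitions.
Set Implicit Arguments. Unset Strict Implicit. Unset Printing Implicit Defensive.
Import Order.TTheory GRing.Theory Num.Theory.
Local Open Scope ring_scope.

Definition C : numClosedFieldType := (Rdefinitions.R)[i].

Section TensorOps.
Variable N : nat.

Definition idx (n : nat) := n.-tuple 'I_N.

(* An element of Mat_{NxN}(C)^{(x) n} (x) V, i.e. an N^n x N^n matrix with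
   entries in V, rows/columns indexed by multi-indices. *)
Definition op (V : Type) (n : nat) := idx n -> idx n -> V.

Variable V : pzRingType.

Definition opmul n (X Y : op V n) : op V n :=
  fun a b => \sum_(c : idx n) X a c * Y c b.
Definition opadd n (X Y : op V n) : op V n := fun a b => X a b + Y a b.
Definition opone n : op V n := fun a b => (a == b)%:R.
Definition oprod n (s : seq (op V n)) : op V n := foldr (@opmul n) (@opone n) s.

(* X_p : the N x N matrix X placed in tensor factor p (0-based), identity elsewhere *)
Definition emb1 n (p : 'I_n) (X : 'I_N -> 'I_N -> V) : op V n :=
  fun a b => if [forall m : 'I_n, (m != p) ==> (tnth a m == tnth b m)]
             then X (tnth a p) (tnth b p) else 0.

(* Y_{p p'} : a matrix Y in Mat^{(x)2} (entry Y i1 i2 j1 j2 = row (i1,i2),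
   column (j1,j2)) acting in tensor factors p, p', identity elsewhere *)
Definition emb2 n (p p' : 'I_n) (Y : 'I_N -> 'I_N -> 'I_N -> 'I_N -> V) : op V n :=
  fun a b => if [forall m : 'I_n, ((m != p) && (m != p')) ==> (tnth a m == tnth b m)]
             then Y (tnth a p) (tnth a p') (tnth b p) (tnth b p') else 0.

(* On n.+1 tensor factors: Y_k := Y_{k k+1} (1-based k, 1 <= k <= n). *)
Definition Rk n (Y : 'I_N -> 'I_N -> 'I_N -> 'I_N -> V) (k : nat) : op V n.+1 :=
  emb2 (inord k.-1) (inord k) Y.

(* X_{\bar k} = R_{k-1} ... R_1 X_1 R_1^{-1} ... R_{k-1}^{-1}  (Ri = R^{-1}) *)
Definition bar n (R Ri : 'I_N -> 'I_N -> 'I_N -> 'I_N -> V)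
    (X : 'I_N -> 'I_N -> V) (k : nat) : op V n.+1 :=
  oprod ([seq @Rk n R j | j <- rev (iota 1 k.-1)]
         ++ emb1 (inord 0) X :: [seq @Rk n Ri j | j <- iota 1 k.-1]).

(* J_k = R_{k-1} ... R_2 R_1^2 R_2 ... R_{k-1}, J_1 = 1 *)
Definition Jk n (R : 'I_N -> 'I_N -> 'I_N -> 'I_N -> V) (k : nat) : op V n.+1 :=
  oprod ([seq @Rk n R j | j <- rev (iota 1 k.-1)] ++ [seq @Rk n R j | j <- iota 1 k.-1]).

(* J_k^{-1} = R_{k-1}^{-1} ... R_1^{-2} ... R_{k-1}^{-1}, given Ri = R^{-1} *)
Definition Jkinv n (Ri : 'I_N -> 'I_N -> 'I_N -> 'I_N -> V) (k : nat) : op V n.+1 :=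
  @Jk n Ri k.

End TensorOps.
Arguments opone {N V n}.
Arguments Rk {N V} n Y k.
Arguments bar {N V} n R Ri X k.
Arguments Jk {N V} n R k.
Arguments Jkinv {N V} n Ri k.

Definition rmat N := 'I_N -> 'I_N -> 'I_N -> 'I_N -> C.

Definition liftR N (A : algType C) (R : rmat N) : 'I_N -> 'I_N -> 'I_N -> 'I_N -> A :=
  fun i1 i2 j1 j2 => (R i1 i2 j1 j2)%:A.

Definition ptrace2 N (X : op N C 3) : rmat N :=
  fun i1 i3 j1 j3 => \sum_(c : 'I_N) X [tuple i1; c; i3] [tuple j1; c; j3].

Definition Pmat N : rmat N := fun i1 i2 j1 j2 => ((i1 == j2) && (i2 == j1))%:R.

Definition skew_invertible_Hecke N (q : C) (R Ri : rmat N) : Prop :=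
  [/\
      (forall a b, opmul (emb2 (inord 0) (inord 1) R) (emb2 (inord 0) (inord 1) Ri) a b
                   = @opone N C 2 a b),
      (forall a b, opmul (emb2 (inord 0) (inord 1) Ri) (emb2 (inord 0) (inord 1) R) a b
                   = @opone N C 2 a b),
      (forall a b, oprod [:: Rk 2 R 1; Rk 2 R 2; Rk 2 R 1] a b
                   = oprod [:: Rk 2 R 2; Rk 2 R 1; Rk 2 R 2] a b),
      (forall a b, opmul (Rk 1 R 1) (Rk 1 R 1) a b
                   = @opone N C 2 a b + (q - q^-1) * Rk 1 R 1 a b) &
      (exists Psi : rmat N,
         (forall i1 i3 j1 j3,
            ptrace2 (opmul (emb2 (inord 0) (inord 1) R) (emb2 (inord 1) (inord 2) Psi))
              i1 i3 j1 j3 = Pmat i1 i3 j1 j3) /\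
         (forall i1 i3 j1 j3,
            ptrace2 (opmul (emb2 (inord 0) (inord 1) Psi) (emb2 (inord 1) (inord 2) R))
              i1 i3 j1 j3 = Pmat i1 i3 j1 j3))].

Definition weyl_relations N (R Ri : rmat N) (A : algType C) (M D : 'I_N -> 'I_N -> A) : Prop :=
  let R12 := emb2 (inord 0) (inord 1) (liftR A R) in
  let Ri12 := emb2 (inord 0) (inord 1) (liftR A Ri) in
  let M1 := emb1 (n := 2) (inord 0) M in
  let D1 := emb1 (n := 2) (inord 0) D in
  let M2 := bar 1 (liftR A R) (liftR A Ri) M 2 in
  [/\
      (forall a b, oprod [:: R12; M1; R12; M1] a b = oprod [:: M1; R12; M1; R12] a b),
      (forall a b, oprod [:: Ri12; D1; Ri12; D1] a b = oprod [:: D1; Ri12; D1; Ri12] a b) &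
      (forall a b, opmul D1 M2 a b = Ri12 a b + oprod [:: M2; D1; Ri12; Ri12] a b)].

Definition Lhat N (A : algType C) (M D : 'I_N -> 'I_N -> A) : 'I_N -> 'I_N -> A :=
  fun i j => \sum_(k : 'I_N) M i k * D k j.

Definition weyl_lhs N (q : C) (R Ri : rmat N) (A : algType C) (M D : 'I_N -> 'I_N -> A)
    (n : nat) : op N A n.+1 :=
  let Lb := bar n (liftR A R) (liftR A Ri) (Lhat M D) in
  let c k : op N A n.+1 := fun a b =>
      (q - q^-1)^-1 *: (Jkinv n (liftR A Ri) k a b - @opone N A n.+1 a b) in
  opmul (Lb 1) (oprod [seq opadd (Lb k) (c k) | k <- iota 2 n]).

Definition weyl_rhs N (R Ri : rmat N) (A : algType C) (M D : 'I_N -> 'I_N -> A)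
    (n : nat) : op N A n.+1 :=
  oprod ([seq bar n (liftR A R) (liftR A Ri) M k | k <- iota 1 n.+1]
         ++ [seq bar n (liftR A R) (liftR A Ri) D k | k <- rev (iota 1 n.+1)]
         ++ [seq Jkinv n (liftR A Ri) k | k <- iota 1 n.+1]).

Arguments weyl_lhs {N} q R Ri {A} M D n.
Arguments weyl_rhs {N} R Ri {A} M D n.

(* Main.v *)
Require Import Defs.
From HB Require Import structures.
From mathcomp Require Import all_boot all_order all_algebra.
From mathcomp Require Import zify.
From Stdlib Require Import FunctionalExtensionality.
Import GRing.Theory.
Local Open Scope ring_scope.

Set Implicit Arguments. Unset Strict Implicit. Unset Printing Implicit Defensive.

Lemma inv_uniq (S : pzRingType) (a a' b b' : S) :
  a = b -> a' * a = 1 -> b * b' = 1 -> a' = b'.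
Proof. by move=> <- h1 h2; rewrite -[a']mulr1 -h2 mulrA h1 mul1r. Qed.

Section Braid.
Variable S : pzRingType.
Variables x y xi yi : S.
Hypotheses (hx : x * xi = 1) (hx' : xi * x = 1) (hy : y * yi = 1) (hy' : yi * y = 1).
Hypothesis br : x * y * x = y * x * y.
Lemma B1 : x * y * xi = yi * x * y.
Proof.
transitivity (yi * (y * x * y) * xi).
  by rewrite !mulrA hy' mul1r.
by rewrite -br !mulrA -(mulrA _ x xi) hx mulr1.
Qed.
Lemma B2 : x * yi * xi = yi * xi * y.
Proof.
apply: (inv_uniq B1).
  by rewrite -!mulrA (mulrA xi x) hx' mul1r (mulrA yi y) hy' mul1r hx.
by rewrite -!mulrA (mulrA y yi) hy mul1r (mulrA x xi) hx mul1r hy'.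
Qed.
Lemma B3 : xi * yi * xi = yi * xi * yi.
Proof.
apply: (inv_uniq br).
  by rewrite -!mulrA (mulrA xi x) hx' mul1r (mulrA yi y) hy' mul1r hx'.
by rewrite -!mulrA (mulrA y yi) hy mul1r (mulrA x xi) hx mul1r hy.
Qed.
End Braid.

Definition lprod (S : pzRingType) (s : seq S) := foldr (fun x y => x * y) 1 s.
Lemma lprod_cat (S : pzRingType) (s t : seq S) : lprod (s ++ t) = lprod s * lprod t.
Proof. by elim: s => [|x s IH] /=; rewrite ?mul1r // IH mulrA. Qed.
Lemma lprod_rcons (S : pzRingType) (s : seq S) x : lprod (rcons s x) = lprod s * x.
Proof. by rewrite -cats1 lprod_cat /= mulr1. Qed.
Lemma lprod_cm (S : pzRingType) (x : S) (f : nat -> S) (l : seq nat) :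
  (forall j, j \in l -> x * f j = f j * x) -> x * lprod (map f l) = lprod (map f l) * x.
Proof.
elim: l => [|j l IH] h /=; first by rewrite mul1r mulr1.
rewrite mulrA h ?mem_head // -!mulrA IH ?mulrA // => i hi; apply: h.
by rewrite in_cons hi orbT.
Qed.

Lemma iotaS1 k : iota 1 k.+1 = rcons (iota 1 k) k.+1.
Proof. by rewrite -cats1 -(addn1 k) iotaD /= addnC. Qed.

Section Abs.
Variable S : pzRingType.
Variable n : nat.
Variables (r ri : nat -> S) (m d om w : S).
Hypothesis rri : forall k, (0 < k <= n)%N -> r k * ri k = 1.
Hypothesis rir : forall k, (0 < k <= n)%N -> ri k * r k = 1.
Hypothesis hecke : forall k, (0 < k <= n)%N -> r k * r k = 1 + om * r k.
Hypothesis braid : forall k, (0 < k)%N -> (k < n)%N -> r k * r k.+1 * r k = r k.+1 * r k * r k.+1.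
Hypothesis far : forall j k, (0 < j)%N -> (j.+1 < k)%N -> (k <= n)%N -> r j * r k = r k * r j.
Hypothesis mr : forall k, (1 < k <= n)%N -> m * r k = r k * m.
Hypothesis dr : forall k, (1 < k <= n)%N -> d * r k = r k * d.
Hypothesis omC : forall x, om * x = x * om.
Hypothesis wC : forall x, w * x = x * w.
Hypothesis omw : om * w = 1.
Hypothesis weyl : (0 < n)%N -> d * (r 1 * m * ri 1) = ri 1 + r 1 * m * ri 1 * d * ri 1 * ri 1.
Hypothesis reD : (0 < n)%N -> ri 1 * d * ri 1 * d = d * ri 1 * d * ri 1.

Definition bar' X k := lprod ([seq r j | j <- rev (iota 1 k.-1)] ++ X :: [seq ri j | j <- iota 1 k.-1]).
Definition Jinv k := lprod ([seq ri j | j <- rev (iota 1 k.-1)] ++ [seq ri j | j <- iota 1 k.-1]).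

Lemma bar1 X : bar' X 1 = X.
Proof. by rewrite /bar' /= mulr1. Qed.
Lemma barS X k : (0 < k)%N -> bar' X k.+1 = r k * bar' X k * ri k.
Proof.
case: k => // k _; rewrite /bar' (_ : k.+2.-1 = k.+1) // (_ : k.+1.-1 = k) // iotaS1 rev_rcons /= map_rcons.
by rewrite -rcons_cons -rcons_cat lprod_rcons !mulrA.
Qed.
Lemma Jinv1 : Jinv 1 = 1.
Proof. by []. Qed.
Lemma JinvS k : (0 < k)%N -> Jinv k.+1 = ri k * Jinv k * ri k.
Proof.
case: k => // k _; rewrite /Jinv (_ : k.+2.-1 = k.+1) // (_ : k.+1.-1 = k) // iotaS1 rev_rcons /= map_rcons.
by rewrite -rcons_cat lprod_rcons !mulrA.
Qed.

Lemma cm_ri x k : (0 < k <= n)%N -> x * r k = r k * x -> x * ri k = ri k * x.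
Proof.
move=> hk h.
by rewrite -[x * ri k]mul1r -(rir hk) -mulrA (mulrA (r k)) -h -!mulrA (rri hk) mulr1.
Qed.
Lemma cm_sym (x y : S) : x * y = y * x -> y * x = x * y. Proof. by []. Qed.

Lemma far_ri j k : (0 < j)%N -> (j.+1 < k)%N -> (k <= n)%N -> ri j * ri k = ri k * ri j.
Proof.
move=> hj hjk hk.
apply: cm_ri; first lia.
apply/esym; apply: cm_ri; first lia.
by symmetry; apply: far.
Qed.
Lemma far_rir j k : (0 < j)%N -> (j.+1 < k)%N -> (k <= n)%N -> ri j * r k = r k * ri j.
Proof. move=> hj hjk hk; symmetry; apply: cm_ri; first lia; symmetry; exact: far. Qed.
Lemma far_rri j k : (0 < j)%N -> (j.+1 < k)%N -> (k <= n)%N -> r j * ri k = ri k * r j.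
Proof. move=> hj hjk hk; apply: cm_ri; first lia; exact: far. Qed.

Section BarC.
Variable X : S.
Hypothesis Xr : forall k, (1 < k <= n)%N -> X * r k = r k * X.

Lemma bar_far k j : (0 < k)%N -> (k < j <= n)%N -> bar' X k * r j = r j * bar' X k.
Proof.
elim: k j => // k IH j _ hj.
case: k IH hj => [|k] IH hj; first by rewrite bar1; apply: Xr.
rewrite barS // -!mulrA (far_rir (j:=k.+1) (k:=j)); try lia.
rewrite (mulrA (bar' X k.+1)) IH; try lia.
by rewrite !mulrA (far (j:=k.+1) (k:=j)); try lia.
Qed.

Lemma bar_near k j : (0 < j)%N -> (j.+1 < k)%N -> (k <= n.+1)%N -> bar' X k * r j = r j * bar' X k.
Proof.
elim: k j => // k IH j hj hjk hk.
have hk0 : (0 < k)%N by lia.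
case: (ltnP j.+1 k) => hjk'.
  rewrite barS // -!mulrA -(far_rri (j:=j) (k:=k)); try lia.
  rewrite (mulrA (bar' X k)) IH; try lia.
  by rewrite !mulrA (far (j:=j) (k:=k)); try lia.
have ek : k = j.+1 by lia.
subst k.
rewrite !barS //.
have hj1 : (0 < j.+1 <= n)%N by lia.
have hj0 : (0 < j <= n)%N by lia.
rewrite !mulrA braid; try lia.
rewrite -(mulrA _ (r j.+1) (bar' X j)) -bar_far; try lia.
rewrite !mulrA.
set P := r j.+1 * r j * bar' X j.
rewrite -(mulrA (P * r j.+1) (ri j) (ri j.+1)) -(mulrA P (r j.+1)) (mulrA (r j.+1)).
rewrite (B2 (rri hj1) (rir hj1) (rri hj0) (rir hj0)); last by rewrite braid //; lia.
by rewrite !mulrA.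
Qed.

Lemma barW_far k : (0 < k)%N -> (k < n)%N ->
  (r k * r k.+1) * bar' X k = bar' X k.+1 * (r k * r k.+1).
Proof.
move=> h0 h1; have hk : (0 < k <= n)%N by lia.
rewrite -mulrA -(bar_far (k:=k) (j:=k.+1)); try lia.
by rewrite barS // !mulrA -(mulrA _ (ri k) (r k)) rir // mulr1.
Qed.
Lemma barS' k : (0 < k <= n)%N -> r k * bar' X k = bar' X k.+1 * r k.
Proof. by move=> hk; rewrite barS; [rewrite -!mulrA rir ?mulr1|lia]. Qed.
Lemma barW_near k : (0 < k)%N -> (k < n)%N ->
  (r k * r k.+1) * bar' X k.+1 = bar' X k.+2 * (r k * r k.+1).
Proof.
move=> h0 h1.
rewrite -mulrA barS'; last lia.
by rewrite mulrA -bar_near; try lia; rewrite mulrA.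
Qed.
End BarC.


Lemma sl2 (x y x' y' z : S) : x * y = x' * y' -> z * x * y = z * x' * y'.
Proof. by move=> h; rewrite -mulrA h mulrA. Qed.
Lemma sl3 (x y u x' y' u' z : S) : x * y * u = x' * y' * u' -> z * x * y * u = z * x' * y' * u'.
Proof. by move=> h; rewrite -!mulrA; congr (z * _); rewrite !mulrA h. Qed.
Lemma sl4 (x y u v x' y' u' v' z : S) : x * y * u * v = x' * y' * u' * v' ->
  z * x * y * u * v = z * x' * y' * u' * v'.
Proof. by move=> h; rewrite -!mulrA; congr (z * _); rewrite !mulrA h. Qed.
Lemma slc (x y z : S) : x * y = 1 -> z * x * y = z.
Proof. by move=> h; rewrite -mulrA h mulr1. Qed.

Lemma Jinv_cm Y i : (forall j, (0 < j)%N -> (j < i)%N -> Y * ri j = ri j * Y) -> Y * Jinv i = Jinv i * Y.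
Proof.
move=> h; rewrite /Jinv -map_cat; apply: lprod_cm => j.
rewrite mem_cat mem_rev orbb mem_iota => /andP [h1 h2]; apply: h; lia.
Qed.

Lemma Jinv_near k j : (0 < j)%N -> (j.+1 < k)%N -> (k <= n.+1)%N -> Jinv k * ri j = ri j * Jinv k.
Proof.
elim: k j => // k IH j hj hjk hk.
have hk0 : (0 < k)%N by lia.
case: (ltnP j.+1 k) => hjk'.
  rewrite JinvS // -!mulrA -(far_ri (j:=j) (k:=k)); try lia.
  rewrite (mulrA (Jinv k)) IH; try lia.
  by rewrite !mulrA -(far_ri (j:=j) (k:=k)); try lia.
have ek : k = j.+1 by lia.
subst k.
rewrite !JinvS //.
have hj1 : (0 < j.+1 <= n)%N by lia.
have hj0 : (0 < j <= n)%N by lia.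
have hjn : (j < n)%N by lia.
have b3 := B3 (rri hj0) (rir hj0) (rri hj1) (rir hj1) (braid hj hjn).
have cmJ : ri j.+1 * Jinv j = Jinv j * ri j.+1.
  apply: Jinv_cm => i hi hij; rewrite (far_ri (j:=i) (k:=j.+1)) //; lia.
rewrite !mulrA b3 -(mulrA _ (ri j.+1) (Jinv j)) cmJ !mulrA.
by rewrite (sl3 (ri j.+1 * ri j * Jinv j) b3).
Qed.

Section Phi.
Variables W Wi : S.
Hypotheses (hW : W * Wi = 1) (hW' : Wi * W = 1).
Definition phi x := W * x * Wi.
Lemma phiM x y : phi (x * y) = phi x * phi y.
Proof. by rewrite /phi !mulrA -(mulrA _ Wi W) hW' mulr1. Qed.
Lemma phiD x y : phi (x + y) = phi x + phi y.
Proof. by rewrite /phi mulrDr mulrDl. Qed.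
Lemma phi_eq x x' : W * x = x' * W -> phi x = x'.
Proof. by move=> h; rewrite /phi h -mulrA hW mulr1. Qed.
End Phi.

Definition Mb k := bar' m k.
Definition Db k := bar' d k.
Definition Del k := lprod [seq Db j | j <- rev (iota 1 k)].
Lemma Del0 : Del 0 = 1. Proof. by []. Qed.
Lemma DelS k : Del k.+1 = Db k.+1 * Del k.
Proof. by rewrite /Del iotaS1 rev_rcons. Qed.

Lemma Del_far k j : (k < j <= n)%N -> Del k * r j = r j * Del k.
Proof.
move=> h; symmetry; apply: lprod_cm => i; rewrite mem_rev mem_iota => hi.
symmetry; apply: bar_far; try lia.
move=> l hl; exact: dr.
Qed.
Lemma Del_far_ri k j : (k < j <= n)%N -> Del k * ri j = ri j * Del k.
Proof. by move=> h; apply: cm_ri; [lia | apply: Del_far]. Qed.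

Lemma Mr k j : (0 < j)%N -> (j.+1 < k)%N -> (k <= n.+1)%N -> Mb k * r j = r j * Mb k.
Proof. move=> *; apply: bar_near => //; move=> l hl; exact: mr. Qed.

Lemma riW k : (0 < k)%N -> (k < n)%N -> (r k * r k.+1) * ri k = ri k.+1 * (r k * r k.+1).
Proof.
move=> h0 h1; have hk : (0 < k <= n)%N by lia.
have hk1 : (0 < k.+1 <= n)%N by lia.
by rewrite (B1 (rri hk) (rir hk1) (braid h0 h1)) !mulrA.
Qed.
Lemma WWi k : (0 < k)%N -> (k < n)%N -> (r k * r k.+1) * (ri k.+1 * ri k) = 1.
Proof.
move=> h0 h1; have hk : (0 < k <= n)%N by lia.
have hk1 : (0 < k.+1 <= n)%N by lia.
by rewrite -mulrA (mulrA (r k.+1)) rri // mul1r rri.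
Qed.
Lemma WiW k : (0 < k)%N -> (k < n)%N -> (ri k.+1 * ri k) * (r k * r k.+1) = 1.
Proof.
move=> h0 h1; have hk : (0 < k <= n)%N by lia.
have hk1 : (0 < k.+1 <= n)%N by lia.
by rewrite -mulrA (mulrA (ri k)) rir // mul1r rir.
Qed.

Lemma mr' k : (1 < k <= n)%N -> m * r k = r k * m. Proof. exact: mr. Qed.
Lemma dr' k : (1 < k <= n)%N -> d * r k = r k * d. Proof. exact: dr. Qed.

Lemma LW k : (0 < k <= n)%N -> Db k * Mb k.+1 = ri k + Mb k.+1 * Db k * ri k * ri k.
Proof.
elim: k => // k IH hk.
case: k IH hk => [|k] IH hk.
  rewrite /Db /Mb (barS m (k:=1)) // !bar1; apply: weyl; lia.
have h0 : (0 < k.+1)%N by [].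
have h1 : (k.+1 < n)%N by lia.
have := congr1 (phi (r k.+1 * r k.+2) (ri k.+2 * ri k.+1)) (IH (_ : (0 < k.+1 <= n)%N)).
rewrite !(phiM (WiW h0 h1)) (phiD _ _) !(phiM (WiW h0 h1)).
rewrite /Db /Mb (phi_eq (WWi h0 h1) (barW_far dr' h0 h1)).
rewrite (phi_eq (WWi h0 h1) (barW_near mr' h0 h1)) (phi_eq (WWi h0 h1) (riW h0 h1)).
by apply; lia.
Qed.

Lemma LRE k : (0 < k <= n)%N -> ri k * Db k * ri k * Db k = Db k * ri k * Db k * ri k.
Proof.
elim: k => // k IH hk.
case: k IH hk => [|k] IH hk.
  by rewrite /Db !bar1; apply: reD.
have h0 : (0 < k.+1)%N by [].
have h1 : (k.+1 < n)%N by lia.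
have := congr1 (phi (r k.+1 * r k.+2) (ri k.+2 * ri k.+1)) (IH (_ : (0 < k.+1 <= n)%N)).
rewrite !(phiM (WiW h0 h1)).
rewrite /Db (phi_eq (WWi h0 h1) (barW_far dr' h0 h1)) (phi_eq (WWi h0 h1) (riW h0 h1)).
by apply; lia.
Qed.

Lemma DbS k : (0 < k)%N -> Db k.+1 = r k * Db k * ri k. Proof. exact: barS. Qed.
Lemma MbS k : (0 < k)%N -> Mb k.+1 = r k * Mb k * ri k. Proof. exact: barS. Qed.

Lemma Hl mm : (mm <= n)%N -> Del mm * Jinv mm.+1 * Db mm.+1 = Db mm.+1 * Del mm * Jinv mm.+1.
Proof.
elim: mm => [|k IH] hk; first by rewrite Del0 Jinv1 !mul1r !mulr1.
have hk1 : (0 < k.+1 <= n)%N by lia.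
have IH' := IH (ltnW hk).
have cD : Del k * ri k.+1 = ri k.+1 * Del k by apply: Del_far_ri; lia.
have lre := LRE hk1.
rewrite DelS (JinvS (k:=k.+1)) // (DbS (k:=k.+1)) // !mulrA.
rewrite (slc _ (rir hk1)).
rewrite (sl2 (Db k.+1) cD).
rewrite (sl3 (Db k.+1 * ri k.+1) IH').
rewrite (sl2 (r k.+1 * Db k.+1 * ri k.+1 * Db k.+1) cD).
rewrite -(sl4 (r k.+1) lre).
by rewrite (rri hk1) mul1r.
Qed.

Fixpoint T k := if k is k'.+1 then Del k' * Jinv k'.+1 * ri k'.+1 + Db k'.+1 * r k'.+1 * T k' * ri k'.+1 else 0.

Lemma Gl mm : (mm <= n)%N -> Del mm * Mb mm.+1 = Mb mm.+1 * Del mm * Jinv mm.+1 + T mm.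
Proof.
elim: mm => [|k IH] hk; first by rewrite Del0 Jinv1 /= mul1r !mulr1 addr0.
have hk1 : (0 < k.+1 <= n)%N by lia.
have IH' := IH (ltnW hk).
have cD : Del k * r k.+1 = r k.+1 * Del k by apply: Del_far; lia.
have cDi : Del k * ri k.+1 = ri k.+1 * Del k by apply: Del_far_ri; lia.
have lw := LW hk1.
have mS : r k.+1 * Mb k.+1 = Mb k.+2 * r k.+1 by exact: (barS' m hk1).
rewrite [in LHS]DelS [in LHS](MbS (k:=k.+1)) // !mulrA.
rewrite (sl2 (Db k.+1) cD).
rewrite -(mulrA (Db k.+1 * r k.+1) (Del k)) IH' mulrDr mulrDl !mulrA.
rewrite (sl2 (Db k.+1) mS) lw !mulrDl (rir hk1) mul1r.
rewrite (slc _ (rir hk1)) -(sl2 (Mb k.+2 * Db k.+1) cDi).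
rewrite [T k.+1]/= DelS (JinvS (k:=k.+1)) // !mulrA.
by rewrite addrCA addrA.
Qed.

Lemma helper1 (a b c : S) : a + (b - (c + a)) = b - c.
Proof. by rewrite addrC opprD addrA subrK. Qed.

Lemma rk_eq k : (0 < k <= n)%N -> r k = ri k + om.
Proof.
move=> hk; have e := hecke hk.
have : r k * r k * ri k = (1 + om * r k) * ri k by rewrite e.
by rewrite -mulrA rri // mulr1 mulrDl mul1r -mulrA rri // mulr1.
Qed.

Lemma Kl mm : (mm <= n)%N -> om * T mm * Db mm.+1 = Del mm - Del mm * Jinv mm.+1.
Proof.
elim: mm => [|k IH] hk; first by rewrite /= mulr0 mul0r Del0 Jinv1 mulr1 subrr.
have hk1 : (0 < k.+1 <= n)%N by lia.
have IH' := IH (ltnW hk).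
have H' := Hl (ltnW hk).
have cD : Del k * r k.+1 = r k.+1 * Del k by apply: Del_far; lia.
rewrite [T k.+1]/= (DbS (k:=k.+1)) // mulrDr mulrDl !mulrA.
rewrite !(slc _ (rir hk1)) (sl3 om H').
rewrite (omC (Db k.+1)) (sl2 (Db k.+1) (omC (r k.+1))).
rewrite -(mulrA (Db k.+1 * r k.+1 * om) (T k) (Db k.+1)) -(mulrA (Db k.+1 * r k.+1) om) (mulrA om) IH'.
rewrite mulrBr mulrBl !mulrA -!(sl2 (Db k.+1) cD) (slc _ (rri hk1)).
rewrite (rk_eq hk1) !mulrDr !mulrDl ?mulrA -(sl2 (Db k.+1) (omC (Del k))) ?mulrA.
by rewrite DelS (JinvS (k:=k.+1)) // !mulrA helper1.
Qed.

Lemma Keyl mm : (mm <= n)%N ->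
  Del mm * (Mb mm.+1 * Db mm.+1 + w * (Jinv mm.+1 - 1)) = Mb mm.+1 * Db mm.+1 * Del mm * Jinv mm.+1.
Proof.
move=> hm.
have Tk : T mm * Db mm.+1 = w * (Del mm - Del mm * Jinv mm.+1).
  by rewrite -(Kl hm) !mulrA (wC om) omw mul1r.
rewrite mulrDr mulrA (Gl hm) mulrDl (sl3 (Mb mm.+1) (Hl hm)) Tk.
rewrite (mulrA (Del mm) w) -(wC (Del mm)) -(mulrA w) (mulrBr (Del mm)) mulr1.
by rewrite -addrA -mulrDr (addrA (Del mm - _)) subrK subrr mulr0 addr0.
Qed.

Lemma cmM (x y z : S) : x * z = z * x -> y * z = z * y -> (x * y) * z = z * (x * y).
Proof. by move=> h1 h2; rewrite -mulrA h2 mulrA h1 mulrA. Qed.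
Lemma cmD (x y z : S) : x * z = z * x -> y * z = z * y -> (x + y) * z = z * (x + y).
Proof. by move=> h1 h2; rewrite mulrDl mulrDr h1 h2. Qed.
Lemma cmB (x y z : S) : x * z = z * x -> y * z = z * y -> (x - y) * z = z * (x - y).
Proof. by move=> h1 h2; rewrite mulrBl mulrBr h1 h2. Qed.

Lemma iotaSr a k : iota a k.+1 = rcons (iota a k) (a + k)%N.
Proof. by rewrite -cats1 -(addn1 k) iotaD. Qed.

Lemma mainA mm : (mm <= n)%N ->
  Mb 1 * Db 1 * lprod [seq Mb k * Db k + w * (Jinv k - 1) | k <- iota 2 mm] =
  lprod [seq Mb k | k <- iota 1 mm.+1] * (Del mm.+1 * lprod [seq Jinv k | k <- iota 1 mm.+1]).
Proof.
elim: mm => [|k IH] hk; first by rewrite /= /Del /= Jinv1 !mulr1.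
have IH' := IH (ltnW hk).
set Jp := lprod [seq Jinv i | i <- iota 1 k.+1].
set Y := Mb k.+2 * Db k.+2 + w * (Jinv k.+2 - 1).
have cJ : forall x, (forall j, (0 < j)%N -> (j <= k)%N -> x * ri j = ri j * x) -> x * Jp = Jp * x.
  move=> x hx; apply: lprod_cm => i; rewrite mem_iota => hi.
  apply: Jinv_cm => j hj hji; apply: hx => //; lia.
have jY : Y * Jp = Jp * Y.
  apply: cJ => j hj hjk.
  have hj' : (0 < j <= n)%N by lia.
  rewrite /Y; apply: cmD; [apply: cmM|apply: cmM; [exact: wC|apply: cmB]].
  - apply: cm_ri => //; apply: Mr; lia.
  - apply: cm_ri => //; apply: bar_near; try lia; exact: dr'.
  - apply: Jinv_near; lia.
  - by rewrite mul1r mulr1.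
have jJ : Jinv k.+2 * Jp = Jp * Jinv k.+2.
  apply: cJ => j hj hjk; apply: Jinv_near; lia.
rewrite iotaSr map_rcons lprod_rcons mulrA IH' add2n.
rewrite (iotaSr 1 k.+1) !map_rcons !lprod_rcons add1n (DelS k.+1) -/Jp -/Y.
move: (lprod [seq Mb k0 | k0 <- iota 1 k.+1]) => Mp.
clearbody Jp.
rewrite -(mulrA Mp) -(mulrA (Del k.+1)) -jY (mulrA (Del k.+1)) /Y (Keyl hk) -jJ.
by rewrite !mulrA.
Qed.

Lemma bar_mul X Y k : (0 < k <= n.+1)%N -> bar' (X * Y) k = bar' X k * bar' Y k.
Proof.
elim: k => // k IH hk.
case: k IH hk => [|k] IH hk; first by rewrite !bar1.
have hk1 : (0 < k.+1 <= n)%N by lia.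
rewrite !(barS _ (k:=k.+1)) // IH; last lia.
by rewrite !mulrA (slc _ (rir hk1)).
Qed.
End Abs.


Lemma funext2 (T U W : Type) (f g : T -> U -> W) : (forall a b, f a b = g a b) -> f = g.
Proof. move=> h; apply: functional_extensionality => a; apply: functional_extensionality => b; exact: h. Qed.

Section ToM.
Variables (N : nat) (A : algType C) (n : nat).
Definition toM (X : op N A n) : 'M[A]_#|{: idx N n}| := \matrix_(i, j) X (enum_val i) (enum_val j).

Lemma toM_mul X Y : toM (opmul X Y) = toM X * toM Y.
Proof.
apply/matrixP => i j; rewrite !mxE /opmul.
rewrite (big_enum_val (A := {: idx N n}) (fun c => X (enum_val i) c * Y c (enum_val j))) /=.
by apply: eq_bigr => k _; rewrite !mxE.
Qed.
Lemma toM_one : toM opone = 1.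
Proof. by apply/matrixP => i j; rewrite !mxE /opone (inj_eq enum_val_inj). Qed.
Lemma toM_add X Y : toM (opadd X Y) = toM X + toM Y.
Proof. by apply/matrixP => i j; rewrite !mxE. Qed.
Lemma toM_oprod s : toM (oprod s) = lprod (map toM s).
Proof. by elim: s => [|x s IH] /=; rewrite ?toM_one // toM_mul IH. Qed.
Lemma toM_c (c : C) X : toM (fun a b => c *: (X a b - opone a b)) = (c%:A)%:M * (toM X - 1).
Proof.
apply/matrixP => i j; rewrite [(_%:M * _)]mul_scalar_mx !mxE /opone (inj_eq enum_val_inj).
by rewrite mulr_algl.
Qed.
Lemma toM_lin (c : A) X : toM (fun a b => opone a b + c * X a b) = 1 + c%:M * toM X.
Proof.
apply/matrixP => i j; rewrite [(_%:M * _)]mul_scalar_mx !mxE /opone (inj_eq enum_val_inj).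
by [].
Qed.
Lemma scal_central (c : C) (Z : 'M[A]_#|{: idx N n}|) : (c%:A)%:M * Z = Z * (c%:A)%:M.
Proof.
apply/matrixP => i j; rewrite [(_%:M * _)]mul_scalar_mx !mxE.
rewrite (bigD1 j) //= big1 ?addr0; last by move=> k /negbTE hk; rewrite !mxE hk mulr0.
by rewrite !mxE eqxx mulr1n comm_alg.
Qed.
Lemma toM_ev X a b : X a b = toM X (enum_rank a) (enum_rank b).
Proof. by rewrite mxE !enum_rankK. Qed.
End ToM.

Section Lift.
Variables (N : nat) (A : algType C) (s : nat).
Definition liftop (X : op N C s) : op N A s := fun a b => (X a b)%:A.
Lemma liftop_mul X Y : liftop (opmul X Y) = opmul (liftop X) (liftop Y).
Proof.
apply: funext2 => a b; rewrite /liftop /opmul scaler_suml.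
by apply: eq_bigr => c _; rewrite mulr_algl scalerA.
Qed.
Lemma liftop_one : liftop opone = opone.
Proof. by apply: funext2 => a b; rewrite /liftop /opone; case: (a == b); rewrite ?scale0r ?scale1r. Qed.
Lemma liftop_oprod l : liftop (oprod l) = oprod (map liftop l).
Proof. by elim: l => [|x l IH] /=; rewrite ?liftop_one // liftop_mul IH. Qed.
Lemma liftop_emb2 p p' (Y : rmat N) : liftop (emb2 p p' Y) = emb2 p p' (liftR A Y).
Proof. by apply: funext2 => a b; rewrite /liftop /emb2 /liftR; case: ifP => //; rewrite scale0r. Qed.
Lemma liftop_lin (c : C) X : liftop (fun a b => opone a b + c * X a b) =
  (fun a b => opone a b + c%:A * liftop X a b).
Proof.
apply: funext2 => a b; rewrite /liftop scalerDl mulr_algl scalerA.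
by rewrite -[(opone a b)%:A]/(liftop opone a b) liftop_one.
Qed.
End Lift.
Lemma liftop_Rk N (A : algType C) t (Y : rmat N) k : @liftop N A t.+1 (Rk t Y k) = Rk t (liftR A Y) k.
Proof. exact: liftop_emb2. Qed.

Section Ext.
Variables (N : nat) (V : pzRingType) (n t p : nat).
Local Notation s := t.+1.
Hypothesis hps : (p + s <= n.+1)%N.
Definition inw (i : 'I_n.+1) := (p <= i < p + s)%N.
Definition agree (a b : idx N n.+1) := [forall i : 'I_n.+1, ~~ inw i ==> (tnth a i == tnth b i)].
Definition win (a : idx N n.+1) : idx N s := [tuple tnth a (inord (p + i)%N) | i < s].
Definition splice (a : idx N n.+1) (c : idx N s) : idx N n.+1 :=
  [tuple if inw i then tnth c (inord (i - p)%N) else tnth a i | i < n.+1].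
Definition ext (X : op N V s) : op N V n.+1 :=
  fun a b => if agree a b then X (win a) (win b) else 0.

Lemma val_inord_pm (i : 'I_s) : nat_of_ord (inord (p + i)%N : 'I_n.+1) = (p + i)%N.
Proof. rewrite inordK //; have := ltn_ord i; lia. Qed.
Lemma inw_pm (i : 'I_s) : inw (inord (p + i)%N).
Proof. rewrite /inw val_inord_pm; have := ltn_ord i; lia. Qed.
Lemma val_inord_mp (i : 'I_n.+1) : inw i -> nat_of_ord (inord (i - p)%N : 'I_s) = (i - p)%N.
Proof. rewrite /inw => h; rewrite inordK //; lia. Qed.
Lemma inord_pmp (i : 'I_n.+1) : inw i -> (inord (p + (inord (i - p)%N : 'I_s))%N : 'I_n.+1) = i.
Proof. move=> h; apply: ord_inj; rewrite val_inord_pm val_inord_mp //; move: h; rewrite /inw; lia. Qed.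

Lemma tnth_win a i : tnth (win a) i = tnth a (inord (p + i)%N).
Proof. by rewrite tnth_mktuple. Qed.
Lemma tnth_splice a c i : tnth (splice a c) i = if inw i then tnth c (inord (i - p)%N) else tnth a i.
Proof. by rewrite tnth_mktuple. Qed.

Lemma win_splice a c : win (splice a c) = c.
Proof.
apply: eq_from_tnth => i; rewrite tnth_win tnth_splice inw_pm.
congr (tnth c _); apply: ord_inj; rewrite /= val_inord_pm inordK; have := ltn_ord i; lia.
Qed.
Lemma agree_splice a c : agree a (splice a c).
Proof. by apply/forallP => i; apply/implyP => hi; rewrite tnth_splice (negbTE hi). Qed.
Lemma splice_win a c : agree a c -> splice a (win c) = c.
Proof.
move/forallP => h; apply: eq_from_tnth => i; rewrite tnth_splice.
case: ifP => hi; first by rewrite tnth_win inord_pmp.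
by apply/eqP; apply: (implyP (h i)); rewrite hi.
Qed.
Lemma agree_trans a b c : agree a b -> agree b c -> agree a c.
Proof.
move=> /forallP h1 /forallP h2; apply/forallP => i; apply/implyP => hi.
by rewrite (eqP (implyP (h1 i) hi)) (implyP (h2 i) hi).
Qed.
Lemma agree_sym a b : agree a b -> agree b a.
Proof.
move=> /forallP h1; apply/forallP => i; apply/implyP => hi.
by rewrite eq_sym (implyP (h1 i) hi).
Qed.
Lemma eq_agree_win a b : (a == b) = agree a b && (win a == win b).
Proof.
apply/idP/idP; first by move/eqP => ->; rewrite eqxx andbT; apply/forallP => i; apply/implyP.
case/andP => /forallP h /eqP hw; apply/eqP; apply: eq_from_tnth => i.
case: (boolP (inw i)) => hi; last by apply/eqP; apply: (implyP (h i)).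
by rewrite -(inord_pmp hi) -!tnth_win hw.
Qed.

Lemma ext_mul X Y : ext (opmul X Y) = opmul (ext X) (ext Y).
Proof.
apply: funext2 => a b; rewrite /ext /opmul.
case: (boolP (agree a b)) => hab; last first.
  rewrite big1 // => c _.
  case: (boolP (agree a c)) => h1; case: (boolP (agree c b)) => h2; rewrite ?mul0r ?mulr0 //.
  by rewrite (agree_trans h1 h2) in hab.
rewrite (bigID (agree a)) /= [X in _ + X]big1 ?addr0; last by move=> c /negbTE ->; rewrite mul0r.
rewrite (reindex_onto (splice a) win (@splice_win a)).
rewrite (eq_bigl xpredT); last by move=> c; rewrite agree_splice win_splice eqxx.
apply: eq_bigr => c _; rewrite agree_splice win_splice.
by rewrite (agree_trans (agree_sym (agree_splice a c)) hab).
Qed.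
Lemma ext_one : ext opone = opone.
Proof. by apply: funext2 => a b; rewrite /ext /opone eq_agree_win; case: (agree a b). Qed.
Lemma ext_oprod l : ext (oprod l) = oprod (map ext l).
Proof. by elim: l => [|x l IH] /=; rewrite ?ext_one // ext_mul IH. Qed.
Lemma ext_lin (c : V) X Y : ext (fun a b => X a b + c * Y a b) = (fun a b => ext X a b + c * ext Y a b).
Proof. by apply: funext2 => a b; rewrite /ext; case: ifP; rewrite ?mulr0 ?addr0. Qed.
Lemma ext_add X Y : ext (fun a b => X a b + Y a b) = (fun a b => ext X a b + ext Y a b).
Proof. by apply: funext2 => a b; rewrite /ext; case: ifP; rewrite ?addr0. Qed.

Lemma cond_eq (a b : idx N n.+1) (i j : 'I_s) :
  agree a b && [forall m : 'I_s, (m != i) && (m != j) ==> (tnth (win a) m == tnth (win b) m)] =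
  [forall m : 'I_n.+1, (m != inord (p + i)%N) && (m != inord (p + j)%N) ==> (tnth a m == tnth b m)].
Proof.
apply/idP/idP.
  case/andP => /forallP hag /forallP hin; apply/forallP => m; apply/implyP => /andP [hmi hmj].
  case: (boolP (inw m)) => hw; last exact: (implyP (hag m)).
  have := implyP (hin (inord (m - p)%N)).
  rewrite !tnth_win inord_pmp //; apply; apply/andP; split.
    apply: contra hmi => /eqP <-; by rewrite inord_pmp.
  apply: contra hmj => /eqP <-; by rewrite inord_pmp.
move/forallP => h; apply/andP; split.
  apply/forallP => m; apply/implyP => hw; apply: (implyP (h m)); apply/andP; split.
    by apply: contra hw => /eqP ->; apply: inw_pm.
  by apply: contra hw => /eqP ->; apply: inw_pm.
apply/forallP => m; apply/implyP => /andP [hmi hmj]; rewrite !tnth_win; apply: (implyP (h _)).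
apply/andP; split.
  apply: contra hmi => /eqP /(congr1 (@nat_of_ord _)); rewrite !val_inord_pm => e; apply/eqP/ord_inj => /=; lia.
apply: contra hmj => /eqP /(congr1 (@nat_of_ord _)); rewrite !val_inord_pm => e; apply/eqP/ord_inj => /=; lia.
Qed.

Lemma ext_emb2 (i j : 'I_s) Y : ext (emb2 i j Y) = emb2 (inord (p + i)%N) (inord (p + j)%N) Y.
Proof.
apply: funext2 => a b; rewrite /ext /emb2 -cond_eq !tnth_win.
by case: (agree a b) => //=; case: ifP.
Qed.
End Ext.

Lemma emb1_emb2 N (V : pzRingType) n (p : 'I_n) (X : 'I_N -> 'I_N -> V) :
  emb1 p X = emb2 p p (fun i _ j _ => X i j).
Proof.
apply: funext2 => a b; rewrite /emb1 /emb2; congr (if _ then _ else _).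
by apply: eq_forallb => m; rewrite andbb.
Qed.

Lemma ext_Rk N (V : pzRingType) n t p (Y : 'I_N -> 'I_N -> 'I_N -> 'I_N -> V) k :
  (0 < k <= t)%N -> (p + t.+1 <= n.+1)%N -> @ext _ _ n t p (Rk t Y k) = Rk n Y (p + k)%N.
Proof.
move=> hk hps; rewrite /Rk ext_emb2 // !inordK; try lia.
by rewrite (_ : (p + k.-1)%N = (p + k).-1) //; lia.
Qed.

Lemma ext_emb1 N (V : pzRingType) n t p (X : 'I_N -> 'I_N -> V) :
  (p + t.+1 <= n.+1)%N -> @ext _ _ n t p (emb1 (n := t.+1) (inord 0) X) = emb1 (inord p) X.
Proof.
move=> hps; rewrite !emb1_emb2 ext_emb2 // inordK //.
by rewrite addn0.
Qed.

Section Disj.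
Variables (N : nat) (V : pzRingType) (n : nat).
Lemma emb2_disj (p p' u u' : 'I_n) (Y Y' : 'I_N -> 'I_N -> 'I_N -> 'I_N -> V) a b :
  u != p -> u != p' -> u' != p -> u' != p' ->
  opmul (emb2 p p' Y) (emb2 u u' Y') a b =
  if [forall m, (m != p) && (m != p') && (m != u) && (m != u') ==> (tnth a m == tnth b m)]
  then Y (tnth a p) (tnth a p') (tnth b p) (tnth b p') * Y' (tnth a u) (tnth a u') (tnth b u) (tnth b u')
  else 0.
Proof.
move=> h1 h2 h3 h4; rewrite /opmul /emb2.
set cs : idx N n := [tuple if (i == p) || (i == p') then tnth b i else tnth a i | i < n].
have tcs i : tnth cs i = if (i == p) || (i == p') then tnth b i else tnth a i by rewrite tnth_mktuple.
rewrite (bigD1 cs) //= big1 ?addr0.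
  have -> : [forall m, (m != p) && (m != p') ==> (tnth a m == tnth cs m)].
    apply/forallP => m; apply/implyP => /andP [hm1 hm2]; by rewrite tcs (negbTE hm1) (negbTE hm2).
  have -> : [forall m, (m != u) && (m != u') ==> (tnth cs m == tnth b m)] =
            [forall m, (m != p) && (m != p') && (m != u) && (m != u') ==> (tnth a m == tnth b m)].
    apply: eq_forallb => m; rewrite tcs.
    case: (eqVneq m p) => [->|hp] /=; first by rewrite eqxx implybT.
    case: (eqVneq m p') => [->|hp'] /=; first by rewrite eqxx implybT.
    by [].
  rewrite !tcs !eqxx /= orbT (negbTE h1) (negbTE h2) (negbTE h3) (negbTE h4) /=.
  by case: ifP; rewrite ?mulr0.
move=> c hc.
case: (boolP [forall m, (m != p) && (m != p') ==> (tnth a m == tnth c m)]) => /= hA; last by rewrite mul0r.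
case: (boolP [forall m, (m != u) && (m != u') ==> (tnth c m == tnth b m)]) => /= hB; last by rewrite mulr0.
exfalso; move/negP: hc; apply; apply/eqP; apply: eq_from_tnth => i; rewrite tcs.
move/forallP: hA => hA; move/forallP: hB => hB.
case: (boolP ((i == p) || (i == p'))) => hi.
  apply/eqP; apply: (implyP (hB i)); apply/andP; split.
    by apply: contraTneq hi => ->; rewrite negb_or h1 h2.
  by apply: contraTneq hi => ->; rewrite negb_or h3 h4.
by apply/esym/eqP; apply: (implyP (hA i)); rewrite -negb_or.
Qed.

Lemma emb2_comm (p p' u u' : 'I_n) (Y Y' : 'I_N -> 'I_N -> 'I_N -> 'I_N -> V) :
  u != p -> u != p' -> u' != p -> u' != p' ->
  (forall i1 i2 i3 i4 j1 j2 j3 j4, Y i1 i2 i3 i4 * Y' j1 j2 j3 j4 = Y' j1 j2 j3 j4 * Y i1 i2 i3 i4) ->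
  opmul (emb2 p p' Y) (emb2 u u' Y') = opmul (emb2 u u' Y') (emb2 p p' Y).
Proof.
move=> h1 h2 h3 h4 hc; apply: funext2 => a b.
rewrite !emb2_disj // 1?eq_sym // 1?eq_sym // 1?eq_sym //.
have -> : [forall m, (m != u) && (m != u') && (m != p) && (m != p') ==> (tnth a m == tnth b m)] =
          [forall m, (m != p) && (m != p') && (m != u) && (m != u') ==> (tnth a m == tnth b m)].
  apply: eq_forallb => m; by case: (m != u); case: (m != u'); case: (m != p); case: (m != p').
by case: ifP.
Qed.
End Disj.

Section Emb1.
Variables (N : nat) (V : pzRingType).
Definition mprod (X Y : 'I_N -> 'I_N -> V) : 'I_N -> 'I_N -> V := fun i j => \sum_k X i k * Y k j.

Lemma inord0_1 : (inord 0 : 'I_1) = ord0.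
Proof. by apply: ord_inj; rewrite inordK. Qed.

Lemma emb1_1 (Z : 'I_N -> 'I_N -> V) (a b : idx N 1) :
  emb1 (inord 0) Z a b = Z (tnth a ord0) (tnth b ord0).
Proof.
rewrite /emb1 inord0_1.
have -> : [forall m : 'I_1, (m != ord0) ==> (tnth a m == tnth b m)].
  by apply/forallP => m; rewrite (ord1 m) eqxx.
by [].
Qed.

Lemma emb1_mul1 (X Y : 'I_N -> 'I_N -> V) :
  opmul (emb1 (n := 1) (inord 0) X) (emb1 (inord 0) Y) = emb1 (inord 0) (mprod X Y).
Proof.
apply: funext2 => a b; rewrite /opmul emb1_1 /mprod.
have bij : {on [pred c : idx N 1 | true], bijective (fun k : 'I_N => [tuple k])}.
  exists (fun c : idx N 1 => tnth c ord0) => // c _.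
  by apply: eq_from_tnth => i; rewrite (ord1 i).
rewrite (reindex _ bij) /=.
by apply: eq_bigr => k _; rewrite !emb1_1.
Qed.

Lemma emb1_mul n (X Y : 'I_N -> 'I_N -> V) :
  opmul (emb1 (n := n.+1) (inord 0) X) (emb1 (inord 0) Y) = emb1 (inord 0) (mprod X Y).
Proof.
have hps : (0 + 0.+1 <= n.+1)%N by [].
rewrite -!(ext_emb1 _ hps) -ext_mul //.
by rewrite emb1_mul1.
Qed.
End Emb1.

Lemma inord_neq n x y : x != y -> (x < n.+1)%N -> (y < n.+1)%N -> (inord x : 'I_n.+1) != inord y.
Proof.
move=> h hx hy; apply: contra h => /eqP /(congr1 (@nat_of_ord _)).
by rewrite !inordK // => ->.
Qed.

Lemma ext_Rk1 N (V : pzRingType) n (Y : 'I_N -> 'I_N -> 'I_N -> 'I_N -> V) k :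
  (0 < k <= n)%N -> @ext _ _ n 1 k.-1 (Rk 1 Y 1) = Rk n Y k.
Proof. move=> hk; rewrite ext_Rk //; last lia. by rewrite addn1 prednK //; lia. Qed.
Lemma ext_Rk2a N (V : pzRingType) n (Y : 'I_N -> 'I_N -> 'I_N -> 'I_N -> V) k :
  (0 < k)%N -> (k < n)%N -> @ext _ _ n 2 k.-1 (Rk 2 Y 1) = Rk n Y k.
Proof. move=> hk hk'; rewrite ext_Rk //; last lia. by rewrite addn1 prednK //; lia. Qed.
Lemma ext_Rk2b N (V : pzRingType) n (Y : 'I_N -> 'I_N -> 'I_N -> 'I_N -> V) k :
  (0 < k)%N -> (k < n)%N -> @ext _ _ n 2 k.-1 (Rk 2 Y 2) = Rk n Y k.+1.
Proof. move=> hk hk'; rewrite ext_Rk //; last lia. by rewrite (_ : (k.-1 + 2)%N = k.+1) //; lia. Qed.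

Unset Implicit Arguments.

Theorem theorem1 (N : nat) (hN : (0 < N)%N) (q : C)
  (hq0 : q != 0) (hq1 : q != 1) (hqm1 : q != -1)
  (hgen : forall k : nat, (0 < k)%N -> q ^+ k != 1)
  (R Ri : rmat N) (hR : skew_invertible_Hecke q R Ri)
  (A : algType C) (M D : 'I_N -> 'I_N -> A) (hW : weyl_relations R Ri M D)
  (n : nat) :
  forall a b : idx N n.+1, weyl_lhs q R Ri M D n a b = weyl_rhs R Ri M D n a b.
Proof.
case: hR => h1 h2 h3 h4 _.
move: hW; rewrite /weyl_relations => -[hM hD hWe].
set R' := liftR A R; set Ri' := liftR A Ri.
pose r k := toM (Rk n R' k).
pose ri k := toM (Rk n Ri' k).
pose mm := toM (emb1 (n := n.+1) (inord 0) M).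
pose dd := toM (emb1 (n := n.+1) (inord 0) D).
pose c := q - q^-1.
pose om : 'M[A]_#|{: idx N n.+1}| := (c%:A)%:M.
pose w : 'M[A]_#|{: idx N n.+1}| := ((c^-1)%:A)%:M.
have hc : c != 0.
  rewrite /c subr_eq0; apply/negP => /eqP e.
  have : q * q = 1 by rewrite {2}e mulfV.
  move/eqP; rewrite -subr_eq0 (_ : q * q - 1 = (q - 1) * (q + 1)); last first.
    by rewrite mulrDr mulr1 !mulrBl mul1r addrA subrK.
  by rewrite mulf_eq0 subr_eq0 (negbTE hq1) /= addr_eq0 (negbTE hqm1).
have rri : forall k, (0 < k <= n)%N -> r k * ri k = 1.
  move=> k hk.
  have e : opmul (Rk 1 R 1) (Rk 1 Ri 1) = opone by exact: funext2 h1.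
  have := congr1 (fun Z => toM (@ext _ _ n 1 k.-1 (liftop A Z))) e.
  rewrite /= liftop_mul !liftop_Rk liftop_one ext_mul; last lia.
  rewrite ext_one ?ext_Rk1 //; last lia.
  by move=> e2; rewrite /r /ri -toM_mul e2 toM_one.
have rir : forall k, (0 < k <= n)%N -> ri k * r k = 1.
  move=> k hk.
  have e : opmul (Rk 1 Ri 1) (Rk 1 R 1) = opone by exact: funext2 h2.
  have := congr1 (fun Z => toM (@ext _ _ n 1 k.-1 (liftop A Z))) e.
  rewrite /= liftop_mul !liftop_Rk liftop_one ext_mul; last lia.
  rewrite ext_one ?ext_Rk1 //; last lia.
  by move=> e2; rewrite /r /ri -toM_mul e2 toM_one.
have hecke : forall k, (0 < k <= n)%N -> r k * r k = 1 + om * r k.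
  move=> k hk.
  have e : opmul (Rk 1 R 1) (Rk 1 R 1) = (fun a b => opone a b + (q - q^-1) * Rk 1 R 1 a b).
    exact: funext2 h4.
  have := congr1 (fun Z => toM (@ext _ _ n 1 k.-1 (liftop A Z))) e.
  rewrite /= liftop_mul liftop_lin !liftop_Rk ext_mul; last lia.
  rewrite ext_lin ext_one ?ext_Rk1 //; last lia.
  by move=> e2; rewrite /r -toM_mul e2 toM_lin.
have braid : forall k, (0 < k)%N -> (k < n)%N -> r k * r k.+1 * r k = r k.+1 * r k * r k.+1.
  move=> k hk hk'.
  have e : oprod [:: Rk 2 R 1; Rk 2 R 2; Rk 2 R 1] = oprod [:: Rk 2 R 2; Rk 2 R 1; Rk 2 R 2].
    exact: funext2 h3.
  have := congr1 (fun Z => toM (@ext _ _ n 2 k.-1 (liftop A Z))) e.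
  cbv beta; rewrite !liftop_oprod !ext_oprod ?toM_oprod; try lia. rewrite /= !liftop_Rk.
  rewrite ?ext_Rk2a ?ext_Rk2b // !mulr1 -!mulrA.
  by apply.
have far : forall j k, (0 < j)%N -> (j.+1 < k)%N -> (k <= n)%N -> r j * r k = r k * r j.
  move=> j k hj hjk hk; rewrite /r -!toM_mul /Rk; congr toM.
  apply: emb2_comm; try (apply: inord_neq; lia).
  by move=> *; rewrite /R' /liftR comm_alg.
have mr : forall k, (1 < k <= n)%N -> mm * r k = r k * mm.
  move=> k hk; rewrite /mm /r -!toM_mul /Rk emb1_emb2; congr toM.
  apply: emb2_comm; try (apply: inord_neq; lia).
  by move=> *; rewrite /R' /liftR comm_alg.
have dr : forall k, (1 < k <= n)%N -> dd * r k = r k * dd.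
  move=> k hk; rewrite /dd /r -!toM_mul /Rk emb1_emb2; congr toM.
  apply: emb2_comm; try (apply: inord_neq; lia).
  by move=> *; rewrite /R' /liftR comm_alg.
have omC : forall x, om * x = x * om by move=> x; apply: scal_central.
have wC : forall x, w * x = x * w by move=> x; apply: scal_central.
have omw : om * w = 1.
  by rewrite /om /w -mulmxE -scalar_mxM mulr_algl scalerA mulfV // scale1r.
have weyl : (0 < n)%N -> dd * (r 1%N * mm * ri 1%N) = ri 1%N + r 1%N * mm * ri 1%N * dd * ri 1%N * ri 1%N.
  move=> hn; have e := funext2 hWe.
  have := congr1 (fun Z => toM (@ext _ _ n 1 0 Z)) e; cbv beta.
  rewrite /bar /= ext_add !ext_mul ?ext_one; try lia.
  rewrite !(@ext_Rk1 _ _ n _ 1) ?ext_emb1 //; try lia.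
  rewrite !toM_mul toM_add !toM_mul toM_one !mulr1 !mulrA.
  by apply.
have reD : (0 < n)%N -> ri 1%N * dd * ri 1%N * dd = dd * ri 1%N * dd * ri 1%N.
  move=> hn; have e := funext2 hD.
  have := congr1 (fun Z => toM (@ext _ _ n 1 0 Z)) e; cbv beta.
  rewrite /= !ext_mul ?ext_one; try lia.
  rewrite !(@ext_Rk1 _ _ n _ 1) ?ext_emb1 //; try lia.
  rewrite !toM_mul toM_one !mulr1 !mulrA.
  by apply.
have MA := mainA rri rir hecke braid far mr dr omC wC omw weyl reD (leqnn n).
have tb : forall X k, toM (bar n R' Ri' X k) = bar' r ri (toM (emb1 (n := n.+1) (inord 0) X)) k.
  by move=> X k; rewrite /bar toM_oprod map_cat /= -!map_comp.
have tJ : forall k, toM (Jkinv n Ri' k) = Jinv ri k.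
  by move=> k; rewrite /Jkinv /Jk toM_oprod map_cat -!map_comp.
have tL : toM (emb1 (n := n.+1) (inord 0) (Lhat M D)) = mm * dd.
  by rewrite /mm /dd -toM_mul emb1_mul.
have E : toM (weyl_lhs q R Ri M D n) = toM (weyl_rhs R Ri M D n).
  rewrite /weyl_lhs /weyl_rhs; cbv zeta beta; rewrite toM_mul tb tL (bar_mul rir weyl reD) // !toM_oprod !map_cat !lprod_cat -!map_comp.
  rewrite (_ : map _ (iota 2 n) = [seq Mb r ri mm k * Db r ri dd k + w * (Jinv ri k - 1) | k <- iota 2 n]); last first.
    apply/eq_in_map => k; rewrite mem_iota => hk /=.
    rewrite toM_add tb tL (bar_mul rir weyl reD); last lia.
    by rewrite toM_c tJ.
  rewrite MA; congr (lprod _ * (lprod _ * lprod _)); apply: eq_map => k /=.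
  - by rewrite tb.
  - by rewrite tb.
  - by rewrite tJ.
move=> a b.
by rewrite (toM_ev (weyl_lhs q R Ri M D n)) E -toM_ev.
Qed.
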